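(* Let $0<\epsilon<1$, $\epsilon_3=\frac{\epsilon}{2|V(H)|}$ and $\epsilon_4=\frac{\epsilon_3}{4k-2}$. For $u,v\in V(H)$, if the shortest path $\pi_{G-D}(u,v)$ is $\epsilon_3$-far away from $V(H)$, then it is an $\epsilon_4$-segment expath.
   Context: $G=(V,E)$ is an undirected graph with $n\ge3$ vertices and real edge weights in $[1,W]$; shortest paths in every subgraph are assumed unique; $\pi_{G'}(x,y)$ is the shortest $x$-$y$ path in $G'$, $\delta_{G'}$ its length, $|P|$ the weighted length of a path $P$, $P[a,b]$ the subpath between $a,b$, and $G-R$ the graph with vertex set $R$ deleted. Let $k=\ln n$. For $R\subseteq V$, $S\subseteq V\setminus R$, an $S$-restricted tree cover of $G-R$ is a family $\{T(w):w\in S\}$ of trees, $T(w)$ a subtree of $G-R$ rooted at $w$, such that (i) for all $u\in S$, $v\in V\setminus R$ there is $w\in S$ with $u,v\in V(T(w))$ and $\mathrm{dep}_{T(w)}(u)+\mathrm{dep}_{T(w)}(v)\le(2k-1)\delta_{G-R}(u,v)$ ($\mathrm{dep}_T(x)$ = weighted distance from $x$ to the root); (ii) each vertex lies in at most $kn^{1/k}(\ln n+1)$ trees. A vertex of such a tree $T$ is a trunk vertex if it lies on the $T$-path between two vertices of $S$; $\mathrm{Trunk}(T)$ is the subtree induced by trunk vertices; $\mathrm{pdeg}_T(v)$ is the degree of $v$ in $\mathrm{Trunk}(T)$ (0 if not trunk). Fix an integer $d\ge2$, a constant $c\ge1$, $s=4e d^{c+1}\ln^2 n+1$; $\mathrm{Hi}(\mathcal{C})$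 is the set of vertices of pseudo-degree $>s$ in some tree of a tree cover $\mathcal{C}$. Fixed tree covers: $\mathcal{T}(S)$ ($S$-restricted, of $G$) and $\mathcal{T}_R(S)$ ($(S\setminus R)$-restricted, of $G-R$), $\mathcal{T}_\varnothing(S)=\mathcal{T}(S)$. Hierarchy tree: root $V$; a node $U$ is a leaf if $\mathrm{Hi}(\mathcal{T}(U))=\varnothing$, else it has children $W_1=\mathrm{Hi}(\mathcal{T}(U))$, $W_i=W_{i-1}\cup\mathrm{Hi}(\mathcal{T}_{W_{i-1}}(U))$ ($2\le i\le d$), recursively. Let $D\subseteq V$, $|D|\le d$, and fix a root-to-node path $V=U_1,\dots,U_p$ in the hierarchy tree, $U_{p+1}=\varnothing$, such that every $f\in D$ has pseudo-degree $\le s$ in every tree of $\mathcal{T}:=\bigcup_{i=1}^p\mathcal{T}_{U_{i+1}}(U_i)$. The level $l(v)$ is the largest $l$ with $v\in U_l$; $G_i$ is the subgraph of $G$ induced by the vertices of level $\le i$. Let $s_0,t_0\in V\setminus D$ be query vertices; for $f\in D$, $T\in\mathcal{T}$ containing $f$, $N_T(f)=\{\mathrm{parent}_T(f)\}\cup(\mathrm{children}_T(f)\cap\mathrm{Trunk}(T))$, $N(f)=\bigcup_T N_T(f)$, and $V(H)=(\{s_0,t_0\}\cup\bigcup_{f\in D}N(f))\setminus D$. A path $P$ from $a$ to $b$ is $\eta$-far away from $V(H)$ if there are no $x\in P\setminus\{a,b\}$, $w\in V(H)$ with $\delta_{G-D}(x,w)\le\eta\cdot\min\{|P[a,x]|,|P[x,b]|\}$.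 $\eta$-segments: for $P=(a=v_0,\dots,v_\ell=b)$ and $1\le i,j<\ell$, $v_i,v_j$ are in the same $\eta$-segment if either both $|P[a,v_i]|,|P[a,v_j]|\le|P|/2$ and $\lfloor\log_{1+\eta}|P[a,v_i]|\rfloor=\lfloor\log_{1+\eta}|P[a,v_j]|\rfloor$, or both $|P[v_i,b]|,|P[v_j,b]|<|P|/2$ and $\lfloor\log_{1+\eta}|P[v_i,b]|\rfloor=\lfloor\log_{1+\eta}|P[v_j,b]|\rfloor$; the classes are contiguous subpaths, and $a,b$ are in no segment. A path $P$ is an $\eta$-segment expath if for every $\eta$-segment $P[x,y]$ of $P$ there is $1\le i\le p$ such that $P[x,y]$ is a shortest path in $G_i$. *)

(* Defs.v *)
From HB Require Import structures.
From mathcomp Require Import all_boot all_order all_algebra.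
From mathcomp Require Import all_classical all_reals all_analysis.
Set Implicit Arguments. Unset Strict Implicit. Unset Printing Implicit Defensive.
Import Order.TTheory GRing.Theory Num.Theory.
Local Open Scope ring_scope.

Section Defs.
Variable R : realType.
Variable V : finType.

Section Walks.
Variable wt : V -> V -> R.

Fixpoint plen (P : seq V) : R :=
  match P with
  | x :: ((y :: _) as P') => wt x y + plen P'
  | _ => 0
  end.

Definition is_walk (A : {set V}) (F : rel V) (x y : V) (P : seq V) : bool :=
  match P with
  | [::] => false
  | z :: q => [&& z == x, last z q == y, all (fun v => v \in A) P & path F z q]
  end.

Definition is_shortest (A : {set V}) (F : rel V) (x y : V) (P : seq V) : Prop :=
  is_walk A F x y P /\ forall Q, is_walk A F x y Q -> plen P <= plen Q.

Definition unique_sp (e : rel V) : Prop :=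
  forall (A : {set V}) (F : rel V), subrel F e ->
  forall x y P Q, is_shortest A F x y P -> is_shortest A F x y Q -> P = Q.

Definition dist_le (e : rel V) (A : {set V}) (x y : V) (r : R) : Prop :=
  exists Q, is_walk A e x y Q /\ plen Q <= r.
End Walks.

Record rtree := RTree { tv : {set V}; troot : V; tpar : V -> V }.

Definition anc (T : rtree) (y x : V) : bool :=
  (x \in tv T) && [exists i : 'I_#|V|, iter i (tpar T) x == y].

Definition wf_tree (e : rel V) (A : {set V}) (T : rtree) : Prop :=
  [/\ troot T \in tv T, tv T \subset A, tpar T (troot T) = troot T,
      forall x, x \in tv T -> x != troot T -> (tpar T x \in tv T) && e x (tpar T x)
    & forall x, x \in tv T -> exists i, iter i (tpar T) x = troot T].

Definition dep (wt : V -> V -> R) (T : rtree) (x : V) : R :=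
  \sum_(i < #|V|) (if iter i (tpar T) x != troot T
                   then wt (iter i (tpar T) x) (iter i.+1 (tpar T) x) else 0).

(* x lies on the T-path between a and b *)
Definition onpath (T : rtree) (a b x : V) : bool :=
  (anc T x a || anc T x b) && [forall y, (anc T y a && anc T y b) ==> anc T y x].

Definition trunk (T : rtree) (S : {set V}) (x : V) : bool :=
  [exists a in S, exists b in S, [&& a \in tv T, b \in tv T & onpath T a b x]].

Definition tadj (T : rtree) (x y : V) : bool :=
  [&& x \in tv T, y \in tv T &
      ((x != troot T) && (tpar T x == y)) || ((y != troot T) && (tpar T y == x))].

Definition pdeg (T : rtree) (S : {set V}) (v : V) : nat :=
  if trunk T S v then #|[set y | tadj T v y && trunk T S y]| else 0%N.

Definition nR : R := (#|V|)%:R.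
Definition kk : R := ln nR.
Definition s_param (d : nat) (c : R) : R :=
  4 * expR 1 * powR (d%:R) (c + 1) * (ln nR) ^+ 2 + 1.

Definition is_tree_cover (e : rel V) (wt : V -> V -> R) (A S : {set V})
    (C : V -> rtree) : Prop :=
  [/\ S \subset A,
      forall w, w \in S -> wf_tree e A (C w) /\ troot (C w) = w,
      forall u v P, u \in S -> v \in A -> is_shortest wt A e u v P ->
        exists2 w, w \in S &
          [/\ u \in tv (C w), v \in tv (C w) &
              dep wt (C w) u + dep wt (C w) v <= (2 * kk - 1) * plen wt P]
    & forall x, #|[set w in S | x \in tv (C w)]|%:R
                <= kk * powR nR (kk^-1) * (ln nR + 1)].

Definition Hi (s : R) (C : V -> rtree) (S : {set V}) : {set V} :=
  [set v | [exists w in S, s < (pdeg (C w) S v)%:R]].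

(* cov Rm S w = T(w) in the fixed tree cover T_Rm(S), which is (S \ Rm)-restricted
   tree cover of G - Rm; T(S) = cov finset.set0 S *)
Section Hierarchy.
Variable s : R.
Variable cov : {set V} -> {set V} -> V -> rtree.

Fixpoint Wc (U : {set V}) (i : nat) : {set V} :=
  match i with
  | 0 => finset.set0
  | i'.+1 => Wc U i' :|: Hi s (cov (Wc U i') U) (U :\: Wc U i')
  end.

Definition hchild (d : nat) (U U' : {set V}) : Prop :=
  Hi s (cov finset.set0 U) U != finset.set0 /\ exists2 i, (1 <= i <= d)%N & U' = Wc U i.

Variable p : nat.
Variable U : nat -> {set V}.

Definition Unext (i : nat) : {set V} := if i == p then finset.set0 else U i.+1.
Definition Sidx (i : nat) : {set V} := U i :\: Unext i.
Definition Ttree (i : nat) (w : V) : rtree := cov (Unext i) (U i) w.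
(* (i, w) indexes a tree of calT = U_{i=1}^p T_{U_{i+1}}(U_i) *)
Definition in_calT (i : nat) (w : V) : bool := (1 <= i <= p)%N && (w \in Sidx i).

Definition lvl (v : V) : nat := \max_(l < p.+1 | (0 < l)%N && (v \in U l)) l.
Definition Gset (i : nat) : {set V} := [set v | (lvl v <= i)%N].

Definition Nf (f : V) : {set V} :=
  [set x | [exists i : 'I_p.+1, exists w,
     [&& in_calT i w, f \in tv (Ttree i w) &
       ((f != troot (Ttree i w)) && (x == tpar (Ttree i w) f)) ||
       [&& x \in tv (Ttree i w), x != troot (Ttree i w), tpar (Ttree i w) x == f
         & trunk (Ttree i w) (Sidx i) x]]]].

Definition VH (D : {set V}) (s0 t0 : V) : {set V} :=
  ([set s0; t0] :|: \bigcup_(f in D) Nf f) :\: D.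
End Hierarchy.

Section Segments.
Variable wt : V -> V -> R.
Variable a : V.  (* default vertex for nth (the start of P) *)

Definition pre (P : seq V) (i : nat) : R := plen wt (take i.+1 P).
Definition suf (P : seq V) (i : nat) : R := plen wt (drop i P).

Definition far (e : rel V) (A X : {set V}) (eta : R) (P : seq V) : Prop :=
  forall i, (0 < i < (size P).-1)%N -> forall w, w \in X ->
    ~ dist_le wt e A (nth a P i) w (eta * Num.min (pre P i) (suf P i)).

Definition flog (eta r : R) : int := Num.floor (ln r / ln (1 + eta)).

Definition seg_rel (eta : R) (P : seq V) (i j : nat) : bool :=
  let L := plen wt P in
  [&& pre P i <= L / 2, pre P j <= L / 2 & flog eta (pre P i) == flog eta (pre P j)]
  || [&& suf P i < L / 2, suf P j < L / 2 & flog eta (suf P i) == flog eta (suf P j)].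

Definition is_segment (eta : R) (P : seq V) (i j : nat) : Prop :=
  [/\ (0 < i)%N, (i <= j)%N, (j < (size P).-1)%N, seg_rel eta P i j
    & forall m, (0 < m < (size P).-1)%N -> seg_rel eta P i m -> (i <= m <= j)%N].

Definition subpath (P : seq V) (i j : nat) : seq V := drop i (take j.+1 P).

Definition expath (e : rel V) (p : nat) (G : nat -> {set V}) (eta : R) (P : seq V) : Prop :=
  forall i j, is_segment eta P i j ->
    exists2 l, (1 <= l <= p)%N &
      is_shortest wt (G l) e (nth a P i) (nth a P j) (subpath P i j).
End Segments.
End Defs.

(* Main.v *)
Require Import Defs.
From HB Require Import structures.
From mathcomp Require Import all_boot all_order all_algebra.
From mathcomp Require Import all_classical all_reals all_analysis.
From mathcomp Require Import zify ring lra.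
From Stdlib Require Import Lia.
Import Order.TTheory GRing.Theory Num.Theory.
Local Open Scope ring_scope.
Set Implicit Arguments. Unset Strict Implicit. Unset Printing Implicit Defensive.

Section WalkLemmas.
Variables (R : realType) (V : finType) (wt : V -> V -> R).
Local Notation plen := (plen wt).

Lemma plen2 x y s : plen (x :: y :: s) = wt x y + plen (y :: s).
Proof. by []. Qed.
Lemma plen1 x : plen [:: x] = 0.
Proof. by []. Qed.

Lemma plen_glue x s t : plen (x :: s ++ t) = plen (x :: s) + plen (last x s :: t).
Proof.
elim: s x => [|y s IH] x; first by rewrite plen1 add0r.
by rewrite cat_cons plen2 IH plen2 addrA.
Qed.

Lemma plen_split P i : (i < size P)%N -> plen P = plen (take i.+1 P) + plen (drop i P).
Proof.
elim: P i => [//|x s IH] [|i]; first by rewrite take_cons take0 plen1 add0r drop0.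
case: s IH => [//|y s] IH Hi.
rewrite /= in Hi.
have := IH i Hi => E.
by rewrite plen2 E take_cons plen2 drop_cons addrA.
Qed.

Lemma plen_rcons x s y : plen (rcons (x :: s) y) = plen (x :: s) + wt (last x s) y.
Proof. by rewrite rcons_cons -cats1 plen_glue plen2 plen1 addr0. Qed.

Lemma plen_rev (wsym : forall x y, wt x y = wt y x) s : plen (rev s) = plen s.
Proof.
elim: s => [//|x s IH]. case: s IH => [//|y s] IH.
rewrite rev_cons. case E: (rev (y :: s)) => [|h t].
  by move: (congr1 size E); rewrite size_rev.
rewrite plen_rcons -E IH plen2.
have -> : last h t = y.
  have : last h (h :: t) = y by rewrite -E rev_cons last_rcons.
  by [].
by rewrite wsym addrC.
Qed.

Definition wpos (F : rel V) := forall x y, F x y -> 0 <= wt x y.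

Lemma plen_ge0 F z q : wpos F -> path F z q -> 0 <= plen (z :: q).
Proof.
move=> hw; elim: q z => [|y q IH] z; first by rewrite plen1.
rewrite plen2 => /andP[Fzy Hp]; apply: addr_ge0; [exact: hw|exact: IH].
Qed.

Lemma is_walkE (A : {set V}) (F : rel V) (a b z : V) (q : seq V) :
  is_walk A F a b (z :: q) = [&& z == a, last z q == b, all (fun v => v \in A) (z :: q) & path F z q].
Proof. by []. Qed.

Lemma walk_take (A : {set V}) (F : rel V) (a b : V) (P : seq V) i : is_walk A F a b P -> (i < size P)%N ->
  is_walk A F a (nth a P i) (take i.+1 P).
Proof.
case: P => [//|z q]; rewrite take_cons !is_walkE => /and4P[/eqP-> Hl Ha Hp] Hi.
apply/and4P; split => //.
- rewrite (last_nth a) size_take; rewrite /= in Hi.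
  case: ltnP => H.
    by rewrite -[a :: take i q]/(take i.+1 (a :: q)) nth_take.
  have -> : i = size q by apply/eqP; rewrite eqn_leq H -ltnS Hi.
  by rewrite take_size.
- apply/allP => x Hx; apply: (allP Ha).
  by move: Hx; rewrite -[_ :: take i q]/(take i.+1 (_ :: q)) => /mem_take.
- exact: take_path.
Qed.

Lemma walk_tail (A : {set V}) (F : rel V) (a b z y : V) q : is_walk A F a b (z :: y :: q) -> is_walk A F y b (y :: q).
Proof.
rewrite !is_walkE /= => /and4P[_ Hl /andP[_ Ha] /andP[_ Hp]].
by rewrite eqxx Hl Ha Hp.
Qed.

Lemma walk_drop (A : {set V}) (F : rel V) (a b : V) (P : seq V) i : is_walk A F a b P -> (i < size P)%N ->
  is_walk A F (nth a P i) b (drop i P).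
Proof.
elim: P a i => [//|z q IH] a [|i] Hw Hi.
  by rewrite drop0 [nth _ _ 0]/=; move: Hw; rewrite !is_walkE => /and4P[/eqP-> Hl Ha Hp]; rewrite eqxx Hl Ha Hp.
case: q IH Hw Hi => [//|y q] IH Hw Hi.
rewrite /= in Hi; rewrite drop_cons [nth a _ _]/=.
rewrite (set_nth_default y); last by [].
exact: IH (walk_tail Hw) Hi.
Qed.

Lemma walk_glue (A : {set V}) (F : rel V) (a b c : V) s t :
  is_walk A F a b s -> is_walk A F b c t -> is_walk A F a c (s ++ behead t).
Proof.
case: s => [//|z q]; case: t => [//|y r]; rewrite !is_walkE.
move=> /and4P[Hz /eqP Hl Ha Hp] /and4P[/eqP Hy Hl2 Ha2 Hp2].
rewrite ?cat_cons Hz last_cat Hl -Hy Hl2 /=.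
rewrite all_cat; move: Ha Ha2 => /= /andP[-> ->] /andP[_ ->].
by rewrite cat_path Hp Hl -Hy Hp2.
Qed.

Lemma plen_glue_walk (A : {set V}) (F : rel V) (a b c : V) s t :
  is_walk A F a b s -> is_walk A F b c t -> plen (s ++ behead t) = plen s + plen t.
Proof.
case: s => [//|z q]; case: t => [//|y r]; rewrite !is_walkE.
move=> /and4P[Hz /eqP Hl Ha Hp] /and4P[/eqP Hy Hl2 Ha2 Hp2].
by rewrite cat_cons plen_glue Hl Hy.
Qed.

Lemma walk_rev (A : {set V}) (F : rel V) (a b : V) s : symmetric F ->
  is_walk A F a b s -> is_walk A F b a (rev s).
Proof.
move=> Fs; case: s => [//|z q]; rewrite [z :: q]lastI rev_rcons !is_walkE -lastI.
move=> /and4P[Hz Hl Ha Hp]; rewrite Hl.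
have -> : all (fun v => v \in A) (last z q :: rev (belast z q)) = all (fun v => v \in A) (z :: q).
  by rewrite -rev_rcons all_rev -lastI.
rewrite Ha.
have -> : last (last z q) (rev (belast z q)) = z.
  case: q {Hl Ha Hp} => [//|y q] /=; by rewrite rev_cons last_rcons.
rewrite Hz rev_path /=.
by rewrite (@eq_path _ _ F) // => x y; rewrite Fs.
Qed.

Lemma walk_sub (A B : {set V}) (F : rel V) (a b : V) s :
  {subset A <= B} -> is_walk A F a b s -> is_walk B F a b s.
Proof.
move=> sAB; case: s => [//|z q]; rewrite !is_walkE => /and4P[H1 H2 Ha H3].
by apply/and4P; split => //; apply/allP => x /(allP Ha); apply: sAB.
Qed.

Lemma walk_restrict (A B : {set V}) (F : rel V) (a b : V) s :
  is_walk A F a b s -> (forall x, x \in s -> x \in B) -> is_walk B F a b s.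
Proof.
case: s => [//|z q]; rewrite !is_walkE => /and4P[H1 H2 Ha H3] HB.
by apply/and4P; split => //; apply/allP => x /HB.
Qed.

Lemma walk_mem (A : {set V}) (F : rel V) (a b : V) s x :
  is_walk A F a b s -> x \in s -> x \in A.
Proof. by case: s => [//|z q]; rewrite is_walkE => /and4P[_ _ /allP Ha _] /Ha. Qed.

Lemma walk_path (A : {set V}) (F : rel V) (a b : V) z q :
  is_walk A F a b (z :: q) -> path F z q.
Proof. by rewrite is_walkE => /and4P[]. Qed.

Lemma walk_head (A : {set V}) (F : rel V) (a b : V) s :
  is_walk A F a b s -> exists q, s = a :: q.
Proof. by case: s => [//|z q]; rewrite is_walkE => /and4P[/eqP-> _ _ _]; exists q. Qed.

Lemma walk_plen_ge0 (A : {set V}) (F : rel V) (a b : V) s :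
  wpos F -> is_walk A F a b s -> 0 <= plen s.
Proof. by move=> hw; case: s => [//|z q] /walk_path; apply: plen_ge0. Qed.

Lemma plen_take_le (A : {set V}) (F : rel V) (a b : V) s i :
  wpos F -> is_walk A F a b s -> plen (take i.+1 s) <= plen s.
Proof.
move=> hw Hw; case: (ltnP i (size s)) => Hi; last by rewrite take_oversize // ltnW.
rewrite [leRHS](plen_split Hi) lerDl; exact: walk_plen_ge0 (walk_drop Hw Hi).
Qed.

Lemma plen_drop_le (A : {set V}) (F : rel V) (a b : V) s i :
  wpos F -> is_walk A F a b s -> (i < size s)%N -> plen (drop i s) <= plen s.
Proof.
move=> hw Hw Hi.
rewrite [leRHS](plen_split Hi) lerDr; exact: walk_plen_ge0 (walk_take Hw Hi).
Qed.

Lemma walk_uniq (A : {set V}) (F : rel V) (a b : V) s : wpos F ->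
  is_walk A F a b s -> exists2 s', is_walk A F a b s' & uniq s' && (plen s' <= plen s).
Proof.
move=> hw; elim: s a => [//|z q IH] a Hw.
case: q IH Hw => [|y q] IH Hw; first by exists [:: z] => //; rewrite /= lexx.
have Hwt := walk_tail Hw.
have [s'' Hw'' /andP[Hu Hle]] := IH y Hwt.
have Hzy : F z y by move: (walk_path Hw); rewrite /= => /andP[].
have Hza : z = a by move: Hw; rewrite is_walkE => /and4P[/eqP].
have Hzin : z \in A by apply: walk_mem Hw _; rewrite inE eqxx.
have Hyin : y \in A by apply: walk_mem Hw _; rewrite !inE eqxx orbT.
have Hw2 : is_walk A F a y [:: z; y].
  rewrite is_walkE; apply/and4P; split; [by rewrite Hza | by [] | | by rewrite /= Hzy].
  by apply/allP => x; rewrite !inE => /orP[/eqP->|/eqP->].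
case Hzs: (z \in s'').
  pose k := index z s''.
  have Hk : (k < size s'')%N by rewrite index_mem.
  have Hwd := walk_drop Hw'' Hk.
  rewrite nth_index // Hza in Hwd.
  exists (drop k s'') => //; apply/andP; split; first exact: drop_uniq.
  apply: le_trans (plen_drop_le hw Hw'' Hk) _.
  apply: le_trans Hle _; rewrite plen2 lerDr; exact: hw.
exists ([:: z; y] ++ behead s''); first exact: walk_glue Hw2 Hw''.
have [r Er] := walk_head Hw''.
apply/andP; split.
  have -> : [:: z; y] ++ behead s'' = z :: s'' by rewrite Er.
  by rewrite cons_uniq Hzs Hu.
by rewrite (plen_glue_walk Hw2 Hw'') plen2 plen1 addr0 lerD2l.
Qed.

Fixpoint seqs_upto (n : nat) : seq (seq V) :=
  if n is n'.+1 then [::] :: [seq x :: s | x <- enum V, s <- seqs_upto n'] else [:: [::]].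

Lemma seqs_uptoP n s : (size s <= n)%N -> s \in seqs_upto n.
Proof.
elim: n s => [|n IH] [|x s] //=; rewrite ?inE // ltnS => Hs.
apply/orP; right; apply/allpairsP; exists (x, s) => /=; split => //.
  by rewrite mem_enum.
exact: IH.
Qed.

Lemma seq_min (L : seq (seq V)) : L != [::] ->
  exists2 m, m \in L & forall s, s \in L -> plen m <= plen s.
Proof.
elim: L => [//|x L IH] _.
case: (eqVneq L [::]) => [->|HL].
  by exists x; rewrite ?inE // => s; rewrite inE => /eqP->.
have [m Hm Hmin] := IH HL.
case: (leP (plen x) (plen m)) => H.
  exists x; first by rewrite inE eqxx.
  move=> s; rewrite inE => /orP[/eqP->//|/Hmin]; exact: le_trans.
exists m; first by rewrite inE Hm orbT.
move=> s; rewrite inE => /orP[/eqP->|/Hmin//]; exact: ltW.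
Qed.

Lemma exists_shortest (A : {set V}) (F : rel V) (a b : V) s : wpos F ->
  is_walk A F a b s -> exists P, is_shortest wt A F a b P /\ plen P <= plen s.
Proof.
move=> hw Hw.
pose L := [seq t <- seqs_upto #|V| | is_walk A F a b t].
have usz (t : seq V) : uniq t -> (size t <= #|V|)%N.
  by move=> Ut; rewrite -(card_uniqP Ut) max_card.
have [s1 Hs1 /andP[U1 L1]] := walk_uniq hw Hw.
have inL : s1 \in L by rewrite mem_filter Hs1 seqs_uptoP // usz.
have [m Hm Hmin] : exists2 m, m \in L & forall t, t \in L -> plen m <= plen t.
  by apply: seq_min; apply/eqP => E; rewrite E in inL.
move: Hm; rewrite mem_filter => /andP[Hwm _].
exists m; split; last exact: le_trans (Hmin _ inL) L1.
split => // Q HQ.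
have [Q1 HQ1 /andP[UQ LQ]] := walk_uniq hw HQ.
apply: le_trans LQ; apply: Hmin.
by rewrite mem_filter HQ1 seqs_uptoP // usz.
Qed.

End WalkLemmas.

Section TreeLemmas.
Variables (R : realType) (V : finType) (wt : V -> V -> R) (e : rel V).
Hypothesis hw : wpos wt e.
Variables (B : {set V}) (T : rtree V).
Hypothesis wfT : wf_tree e B T.
Local Notation par := (tpar T).
Local Notation r := (troot T).
Local Notation plen := (plen wt).

Lemma root_in : r \in tv T. Proof. by case: wfT. Qed.
Lemma par_root : par r = r. Proof. by case: wfT. Qed.

Lemma iter_root i : iter i par r = r.
Proof. by elim: i => [//|i IH]; rewrite iterS IH par_root. Qed.

Lemma iter_tv x i : x \in tv T -> iter i par x \in tv T.
Proof.
move=> Hx; elim: i => [//|i IH]; rewrite iterS.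
case: (eqVneq (iter i par x) r) => [->|Hne]; first by rewrite par_root root_in.
by case: wfT => _ _ _ H4 _; case/andP: (H4 _ IH Hne).
Qed.

Lemma iter_edge x i : x \in tv T -> iter i par x != r -> e (iter i par x) (iter i.+1 par x).
Proof.
move=> Hx Hne; rewrite iterS.
by case: wfT => _ _ _ H4 _; case/andP: (H4 _ (iter_tv i Hx) Hne).
Qed.

Lemma root_index x : x \in tv T -> exists n, [/\ (n < #|V|)%N, iter n par x = r
   & forall i, (i < n)%N -> iter i par x != r].
Proof.
move=> Hx.
have exP : exists n, iter n par x == r.
  by case: wfT => _ _ _ _ H5; have [i Hi] := H5 _ Hx; exists i; apply/eqP.
case: (ex_minnP exP) => n /eqP Hn Hmin.
have Hlt : forall i, (i < n)%N -> iter i par x != r.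
  by move=> i Hi; apply/negP => /Hmin; rewrite leqNgt Hi.
exists n; split => //.
have U : uniq (traject par x n.+1).
  rewrite looping_uniq; apply/negP => /trajectP[i Hi E].
  by move: (Hlt i Hi); rewrite -E Hn eqxx.
by move: (card_uniqP U); rewrite size_traject => <-; apply: max_card.
Qed.

Lemma plen_traject x n : plen (traject par x n.+1) = \sum_(i < n) wt (iter i par x) (iter i.+1 par x).
Proof.
elim: n x => [|n IH] x; first by rewrite big_ord0.
rewrite trajectS trajectS plen2 -trajectS IH big_ord_recl /=.
congr (_ + _); apply: eq_bigr => i _; by rewrite -!iterSr.
Qed.

Lemma dep_traject x n : (n <= #|V|)%N -> iter n par x = r ->
  (forall i, (i < n)%N -> iter i par x != r) ->
  dep wt T x = plen (traject par x n.+1).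
Proof.
move=> Hn Hr Hlt; rewrite plen_traject /dep.
rewrite -(big_mkord xpredT (fun i : nat => if iter i par x != r then wt (iter i par x) (iter i.+1 par x) else 0)).
rewrite -(big_mkord xpredT (fun i : nat => wt (iter i par x) (iter i.+1 par x))).
rewrite (@big_cat_nat _ _ _ n 0 #|V|) /=; [|by []|by []].

rewrite [X in _ + X]big_nat_cond [X in _ + X]big1 ?addr0.
  apply: eq_big_nat => i /andP[_ Hi]; by rewrite (Hlt i Hi).
move=> i /andP[/andP[Hi _] _].
by rewrite -(subnK Hi) iterD Hr iter_root eqxx.
Qed.

Lemma chain_path x k : x \in tv T -> (forall i, (i < k)%N -> iter i par x != r) ->
  path e x (traject par (par x) k).
Proof.
elim: k x => [//|k IH] x Hx Hlt.
rewrite trajectS /=; apply/andP; split.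
  by have := @iter_edge x 0 Hx (Hlt 0 isT).
have Hpx : par x \in tv T by apply: (@iter_tv x 1 Hx).
apply: IH => // i Hi; rewrite -iterSr; exact: Hlt.
Qed.

Lemma chain_walk (C : {set V}) x k : x \in tv T -> (forall i, (i < k)%N -> iter i par x != r) ->
  (forall i, (i <= k)%N -> iter i par x \in C) ->
  is_walk C e x (iter k par x) (traject par x k.+1).
Proof.
move=> Hx Hlt HC; rewrite trajectS is_walkE; apply/and4P; split => //.
- by rewrite last_traject.
- by rewrite -trajectS; apply/allP => y /trajectP[i Hi ->]; apply: HC.
- exact: chain_path.
Qed.

Lemma dep_ge0 x : x \in tv T -> 0 <= dep wt T x.
Proof.
move=> Hx; have [n [Hn Hr Hlt]] := root_index Hx.
rewrite (dep_traject (ltnW Hn) Hr Hlt).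
apply: plen_ge0 hw _; exact: chain_path.
Qed.

Lemma iter_after x i j : iter i par x = r -> (i <= j)%N -> iter j par x = r.
Proof. by move=> Hi Hij; rewrite -(subnK Hij) iterD Hi iter_root. Qed.

Lemma chain_full x : x \in tv T -> exists n, [/\ (n < #|V|)%N, iter n par x = r,
   forall i, (i < n)%N -> iter i par x != r,
   dep wt T x = plen (traject par x n.+1)
 & is_walk [set: V] e x r (traject par x n.+1)].
Proof.
move=> Hx; have [n [Hn Hr Hlt]] := root_index Hx.
exists n; split => //; first exact: dep_traject (ltnW Hn) Hr Hlt.
by rewrite -Hr; apply: chain_walk => // i _; rewrite inE.
Qed.

Lemma tree_escape (D : {set V}) z f : (forall x y, wt x y = wt y x) -> symmetric e -> z \in tv T -> f \in tv T ->
  z \notin D -> f \in D ->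
  exists nb f', [/\ nb \notin D, f' \in D, f' \in tv T,
     dist_le wt e (~: D) z nb (dep wt T z + dep wt T f) &
     ((f' != r) && (nb == par f')) ||
     [&& nb \in tv T, nb != r, par nb == f', anc T r nb & anc T nb z]].
Proof.
move=> wsym esym Hz Hf HzD HfD.
have [nz [Hnz Hrz Hltz depz Wz]] := chain_full Hz.
have [nf [Hnf Hrf Hltf depf Wf]] := chain_full Hf.
have depf0 := dep_ge0 Hf.
have depz0 := dep_ge0 Hz.
case: (boolP [exists m : 'I_nz.+1, iter m par z \in D]) => [/existsP[m Hm]|HB].
  have exP : exists m, iter m par z \in D by exists m.
  case: (ex_minnP exP) => m0 Hm0 Hmin.
  have Hm0le : (m0 <= nz)%N by apply: leq_trans (Hmin _ Hm) _; rewrite -ltnS.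
  case: m0 Hm0 Hmin Hm0le => [|k] Hm0 Hmin Hm0le; first by rewrite /= (negbTE HzD) in Hm0.
  have HkD : forall i, (i <= k)%N -> iter i par z \notin D.
    by move=> i Hi; apply/negP => /Hmin; rewrite leqNgt ltnS Hi.
  set nb := iter k par z.
  have Hnbr : nb != r.
    apply/negP => /eqP E; move: Hm0; rewrite iterS -/nb E par_root -E.
    by rewrite (negbTE (HkD k (leqnn k))).
  have Hltk : forall i, (i < k)%N -> iter i par z != r.
    move=> i Hi; apply/negP => /eqP E; move/negP: Hnbr; apply.
    by apply/eqP; apply: iter_after E (ltnW Hi).
  have Hknz : (k < nz)%N.
    rewrite ltnNge; apply/negP => H; move/negP: Hnbr; apply; apply/eqP.
    exact: iter_after Hrz H.
  exists nb, (iter k.+1 par z); split.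
  - exact: HkD.
  - exact: Hm0.
  - exact: iter_tv.
  - exists (traject par z k.+1); split.
      apply: chain_walk => // i Hi; rewrite inE; exact: HkD.
    apply: (@le_trans _ _ (dep wt T z)); last by rewrite lerDl.
    rewrite depz -[traject par z k.+1](@take_traject _ _ nz.+1 k.+1); last exact: ltnW Hknz.
    exact: plen_take_le hw Wz.
  - apply/orP; right; rewrite (iter_tv k Hz) Hnbr -iterS eqxx /=.
    apply/andP; split.
      rewrite /anc (iter_tv k Hz) /=; apply/existsP.
      have Hlt : (nz - k < #|V|)%N by apply: leq_ltn_trans (leq_subr _ _) Hnz.
      exists (Ordinal Hlt); rewrite /= /nb -iterD subnK ?Hrz //; exact: ltnW.
    rewrite /anc Hz /=; apply/existsP.
    have Hlt : (k < #|V|)%N by apply: ltn_trans Hknz Hnz.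
    by exists (Ordinal Hlt).
have hz : forall i, (i <= nz)%N -> iter i par z \notin D.
  move=> i Hi; apply/negP => HiD; move/negP: HB; apply; apply/existsP.
  by exists (Ordinal (Hi : (i < nz.+1)%N)).
have HrD : r \notin D by rewrite -Hrz; exact: hz.
have exP : exists m, iter m par f \in D by exists 0%N.
have bnd : forall m, iter m par f \in D -> (m <= nf)%N.
  move=> m Hm; rewrite leqNgt; apply/negP => H.
  by move: Hm; rewrite (iter_after Hrf (ltnW H)) (negbTE HrD).
case: (ex_maxnP exP bnd) => m1 Hm1 Hmax.
have Hm1r : iter m1 par f != r by apply/negP => /eqP E; move: Hm1; rewrite E (negbTE HrD).
have Hm1lt : (m1 < nf)%N.
  rewrite ltnNge; apply/negP => H; move/negP: Hm1r; apply; apply/eqP.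
  exact: iter_after Hrf H.
set nb := iter m1.+1 par f.
have HnbD : nb \notin D by apply/negP => /Hmax; rewrite ltnn.
set k2 := (nf - m1.+1)%N.
have Hk2 : (k2 + m1.+1 = nf)%N by rewrite subnK.
have Hnbtv : nb \in tv T by apply: iter_tv.
have W2 : is_walk (~: D) e nb (iter k2 par nb) (traject par nb k2.+1).
  apply: chain_walk => //.
    move=> i Hi; rewrite /nb -iterD; apply: Hltf.
    by rewrite -Hk2 ltn_add2r.
  move=> i Hi; rewrite inE /nb -iterD; apply/negP => /Hmax.
  by rewrite leqNgt ltn_addl.
have E2 : iter k2 par nb = r by rewrite /nb -iterD Hk2.
rewrite E2 in W2.
have W1 : is_walk (~: D) e z r (traject par z nz.+1).
  rewrite -Hrz; apply: chain_walk => // i Hi; rewrite inE; exact: hz.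
have W2r := walk_rev esym W2.
exists nb, (iter m1 par f); split => //.

- exact: iter_tv.
- exists (traject par z nz.+1 ++ behead (rev (traject par nb k2.+1))); split.
    exact: walk_glue W1 W2r.
  rewrite (plen_glue_walk wt W1 W2r) -depz lerD2l plen_rev //.
  rewrite depf.
  have Etr : traject par f nf.+1 = traject par f m1.+1 ++ traject par nb (nf - m1)%N.
    by rewrite -trajectD -(subSS m1 nf) subnKC // ltnW.
  have -> : traject par nb k2.+1 = drop m1.+1 (traject par f nf.+1).
    by rewrite Etr drop_size_cat ?size_traject // /k2 subnSK.
  by apply: plen_drop_le hw Wf _; rewrite size_traject.
- by rewrite Hm1r /nb iterS eqxx.
Qed.

End TreeLemmas.

Section PathIdx.
Variables (R : realType) (V : finType) (wt : V -> V -> R) (e : rel V).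
Hypothesis hw1 : forall x y, e x y -> 1 <= wt x y.
Variables (A : {set V}) (a b : V) (P : seq V).
Hypothesis HPw : is_walk A e a b P.
Local Notation plen := (plen wt).
Local Notation L := (plen P).
Local Notation pre := (pre wt P).
Local Notation suf := (suf wt P).

Lemma hw0 : wpos wt e.
Proof. by move=> x y /hw1; apply: le_trans. Qed.

Lemma pre_suf i : (i < size P)%N -> L = pre i + suf i.
Proof. exact: plen_split. Qed.

Lemma pre_mono i k : (i <= k)%N -> (k < size P)%N -> pre i <= pre k.
Proof.
move=> Hik Hk; rewrite /Defs.pre -(take_takel P (_ : i.+1 <= k.+1)%N) //.
exact: plen_take_le hw0 (walk_take HPw Hk).
Qed.

Lemma suf_anti i k : (i <= k)%N -> (k < size P)%N -> suf k <= suf i.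
Proof.
move=> Hik Hk; have Hi : (i < size P)%N by apply: leq_ltn_trans Hk.
have := pre_mono Hik Hk; have := pre_suf Hi; have := pre_suf Hk.
move=> E1 E2; rewrite -(lerD2r (suf k)) -E1 E2 => H.
by rewrite -(lerD2l (pre i)) (le_trans _ H) // lerD2r.
Qed.

Lemma plen_sub i j : (i <= j)%N -> (j < size P)%N -> plen (subpath P i j) = pre j - pre i.
Proof.
move=> Hij Hj; rewrite /subpath /Defs.pre.
have Hs : (i < size (take j.+1 P))%N by rewrite size_take; case: ifP => // _; apply: leq_ltn_trans Hj.
rewrite [plen (take j.+1 P)](plen_split wt Hs) take_takel //.
by rewrite [X in X - _]addrC addrK.
Qed.

Lemma walk_sub_idx i j : (i <= j)%N -> (j < size P)%N ->
  is_walk A e (nth a P i) (nth a P j) (subpath P i j).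
Proof.
move=> Hij Hj; have Wt := walk_take HPw Hj.
have Hs : (i < size (take j.+1 P))%N by rewrite size_take; case: ifP => // _; apply: leq_ltn_trans Hj.
have := walk_drop Wt Hs; rewrite nth_take //.
Qed.

Lemma mem_sub_idx i j x : (j < size P)%N -> x \in subpath P i j ->
  exists k, [/\ (i <= k)%N, (k <= j)%N & x = nth a P k].
Proof.
move=> Hj /(nthP a)[k' Hk' <-]; exists (i + k')%N.
have Hst : size (take j.+1 P) = j.+1 by apply: size_takel.
move: Hk'; rewrite size_drop Hst ltn_subRL => Hk'.
rewrite /subpath nth_drop nth_take //; split => //; first exact: leq_addr.
Qed.

Lemma plen_ge1 (C : {set V}) x y s : is_walk C e x y s -> (1 < size s)%N -> 1 <= plen s.
Proof.
case: s => [//|z [//|w q]] Hw _.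
rewrite plen2; have := walk_path Hw; rewrite /= => /andP[Hzw Hp].
rewrite -[1]addr0; apply: lerD; first exact: hw1.
exact: plen_ge0 hw0 Hp.
Qed.

Lemma pre_ge1 i : (0 < i)%N -> (i < size P)%N -> 1 <= pre i.
Proof.
move=> Hi Hs; apply: plen_ge1 (walk_take HPw Hs) _.
by rewrite size_takel.
Qed.

Lemma suf_ge1 i : (i < (size P).-1)%N -> 1 <= suf i.
Proof.
move=> Hi; have Hs : (i < size P)%N by apply: leq_trans Hi (leq_pred _).
apply: plen_ge1 (walk_drop HPw Hs) _.
rewrite size_drop; move: Hi Hs; case: (size P) => [//|n] /= Hi _; lia.
Qed.

End PathIdx.

Section Levels.
Variables (V : finType) (p : nat) (U : nat -> {set V}).
Hypotheses (Hp : (1 <= p)%N) (HU1 : U 1%N = [set: V]).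

Lemma lvl_max v l : (l <= p)%N -> (0 < l)%N -> v \in U l -> (l <= lvl p U v)%N.
Proof.
move=> Hl H0 Hv; have Hl' : (l < p.+1)%N by [].
by apply: (@leq_bigmax_cond _ _ (fun i : 'I_p.+1 => nat_of_ord i) (Ordinal Hl')); rewrite /= H0 Hv.
Qed.

Lemma lvl_ge1 v : (1 <= lvl p U v)%N.
Proof. by apply: lvl_max => //; rewrite HU1 inE. Qed.

Lemma lvl_le v : (lvl p U v <= p)%N.
Proof. by apply/bigmax_leqP => i _; rewrite -ltnS; exact: ltn_ord. Qed.

Lemma lvl_in v : v \in U (lvl p U v).
Proof.
have H1 : (1 < p.+1)%N by [].
have P1 : (0 < Ordinal H1)%N && (v \in U (Ordinal H1)) by rewrite /= HU1 inE.
rewrite /lvl (@bigop.bigmax_eq_arg _ (Ordinal H1) (fun i : 'I_p.+1 => (0 < i)%N && (v \in U i)) (fun i : 'I_p.+1 => nat_of_ord i) P1).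
by case: arg_maxnP => // i /andP[_ Hi] _.
Qed.

Lemma Gset_Unext l v : (l <= p)%N -> v \in Gset p U l -> v \notin Unext p U l.
Proof.
move=> Hl; rewrite /Unext inE; case: eqP => [_|Hne]; first by rewrite inE.
move=> Hv; apply/negP => HvU.
have Hl1 : (l.+1 <= p)%N by rewrite ltn_neqAle Hl andbT; apply/eqP.
by have := lvl_max Hl1 isT HvU; rewrite ltnNge Hv.
Qed.

End Levels.

Section Reals.
Variable (R : realType).

Lemma flog_close (eta a b : R) : 0 < eta -> 0 < a -> 0 < b ->
  flog eta a = flog eta b -> b <= (1 + eta) * a.
Proof.
move=> he ha hb; rewrite /flog => E.
have ht : 0 < ln (1 + eta) by apply: ln_gt0; rewrite ltrDl.
set t := ln (1 + eta) in ht *.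
have [Fa1 _] := andP (floor_itv (ln a / t)).
have [_ Fb2] := andP (floor_itv (ln b / t)).
rewrite -E intrD in Fb2.
have H : ln b / t < ln a / t + 1 by apply: lt_le_trans Fb2 _; rewrite lerD2r.
have H2 : ln b < ln a + t.
  have tn0 : t != 0 by rewrite gt_eqF.
  by move: H; rewrite ltr_pdivrMr // mulrDl mul1r divfK.
rewrite -ler_ln ?posrE ?mulr_gt0 ?addr_gt0 //.
rewrite lnM ?posrE ?addr_gt0 //; rewrite addrC; exact: ltW.
Qed.

Lemma ln3 : 2 / 3 <= ln (3 : R).
Proof.
have h : (-1 : R) < - (2 / 3) by rewrite ltrN2; lra.
have := le_ln1Dx h.
have -> : 1 + - (2 / 3) = (3 : R)^-1 by field.
rewrite lnV ?posrE //; lra.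
Qed.

End Reals.

Lemma argmax_range (F : nat -> nat) i j : (i <= j)%N -> exists k0,
  [/\ (i <= k0)%N, (k0 <= j)%N & forall k, (i <= k)%N -> (k <= j)%N -> (F k <= F k0)%N].
Proof.
elim: j => [|j IH] Hij.
  exists 0%N; split => // k _; rewrite leqn0 => /eqP->; exact: leqnn.
case: (eqVneq i j.+1) => [->|Hne].
  exists j.+1; split => // k H1 H2; have -> : k = j.+1 by apply/eqP; rewrite eqn_leq H1 H2.
  exact: leqnn.
have Hij' : (i <= j)%N by rewrite -ltnS ltn_neqAle Hne Hij.
have [k0 [H1 H2 H3]] := IH Hij'.
case: (leqP (F j.+1) (F k0)) => HF.
  exists k0; split => //; first exact: leqW.
  move=> k Hk1; rewrite leq_eqVlt => /orP[/eqP->//|]; rewrite ltnS; exact: H3.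
exists j.+1; split => // k Hk1; rewrite leq_eqVlt => /orP[/eqP->//|]; rewrite ltnS => Hk2.
exact: leq_trans (H3 _ Hk1 Hk2) (ltnW HF).
Qed.

Lemma kk_arith (R : realType) (k e3 : R) : 2 / 3 <= k ->
  [/\ 0 < 4 * k - 2, 0 <= 2 * k - 1 & (2 * k - 1) * 2 * (e3 / (4 * k - 2)) = e3].
Proof.
move=> hk; have h1 : 0 < 4 * k - 2 by lra.
split => //; first lra.
field; lra.
Qed.

Section Arith.
Variable R : realType.
Implicit Types a b c q s K M x y z : R.

Lemma arith1 a b c q : q < b - a -> b + c <= a + (q + c) -> False.
Proof. lra. Qed.

Lemma arith3 a b c x : 0 < x -> b <= (1 + x) * a -> a <= c -> b - a <= x * c.
Proof.
move=> hx hb hac; apply: le_trans (_ : x * a <= x * c); last by rewrite ler_pM2l.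
move: hb; rewrite mulrDl mul1r; lra.
Qed.

Lemma arith_min1 a s L b : L = a + s -> a <= b -> b <= L / 2 -> a <= s.
Proof. lra. Qed.

Lemma arith_min2 a s L b : L = a + s -> s <= b -> b < L / 2 -> s <= a.
Proof. lra. Qed.

Lemma arith_sub2 a b c q L : L = a + c -> L = b + q -> b - a = c - q.
Proof. lra. Qed.

Lemma arith2 K Ps Wl c qx S Q M (e3 e4 : R) : 0 <= K -> Ps <= Wl -> Wl = c + qx -> c <= S ->
  qx <= Q -> Q < S -> S <= e4 * M -> K * 2 * e4 = e3 -> K * Ps <= e3 * M.
Proof.
move=> hK h1 h2 h3 h4 h5 h6 h7.
have : Ps <= 2 * (e4 * M) by lra.
move=> h; apply: le_trans (ler_wpM2l hK h) _.
by rewrite -h7 !mulrA.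
Qed.
End Arith.

Unset Implicit Arguments.
Set Strict Implicit.

Theorem theorem4p3 (R : realType) (V : finType) (e : rel V) (wt : V -> V -> R)
    (W : R) (d : nat) (c : R) (cov : {set V} -> {set V} -> V -> rtree V)
    (D : {set V}) (p : nat) (U : nat -> {set V}) (s0 t0 : V) (eps : R)
    (u v : V) (P : seq V) :
  (3 <= #|V|)%N ->
  symmetric e -> irreflexive e ->
  (forall x y, wt x y = wt y x) ->
  (forall x y, e x y -> 1 <= wt x y <= W) ->
  unique_sp wt e ->
  (2 <= d)%N -> 1 <= c ->
  (forall Rm S : {set V}, is_tree_cover e wt (~: Rm) (S :\: Rm) (cov Rm S)) ->
  (#|D| <= d)%N ->
  (1 <= p)%N -> U 1%N = [set: V] ->
  (forall i, (1 <= i < p)%N -> hchild (s_param V d c) cov d (U i) (U i.+1)) ->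
  (forall f, f \in D -> forall i w, in_calT p U i w ->
     (pdeg (Ttree cov p U i w) (Sidx p U i) f)%:R <= s_param V d c) ->
  s0 \notin D -> t0 \notin D ->
  0 < eps < 1 ->
  let VHs := VH cov p U D s0 t0 in
  let eps3 := eps / (2 * (#|VHs|)%:R) in
  let eps4 := eps3 / (4 * kk R V - 2) in
  u \in VHs -> v \in VHs ->
  is_shortest wt (~: D) e u v P ->
  far wt u e (~: D) VHs eps3 P ->
  expath wt u e p (Gset p U) eps4 P.
Proof.
move=> Hn3 esym eirr wsym wbd usp Hd Hc Hcov HD Hp HU1 Hch Hpdeg Hs0 Ht0 /andP[eps0 eps1].
move=> VHs eps3 eps4 Hu Hv HP Hfar.
have hw1 : forall x y, e x y -> 1 <= wt x y by move=> x y /wbd /andP[].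
have hw := hw0 hw1.
case: HP => HPw HPmin.
have kk_gt : 2 / 3 <= kk R V.
  rewrite /kk /nR; apply: le_trans (ln3 R) _.
  by rewrite ler_ln ?posrE ?ler_nat // ltr0n; apply: leq_trans Hn3.
have VHpos : (0 : R) < (#|VHs|)%:R by rewrite ltr0n; apply/card_gt0P; exists u.
have eps3_pos : 0 < eps3 by rewrite /eps3 divr_gt0 // mulr_gt0.
have [den_pos k2_ge0 key] := kk_arith eps3 kk_gt.
have eps4_pos : 0 < eps4 by rewrite /eps4 divr_gt0.
move=> i j [Hi0 Hij Hj Hseg _].
have Hjs : (j < size P)%N by apply: leq_trans Hj (leq_pred _).
have His : (i < size P)%N by apply: leq_ltn_trans Hjs.
have [k0 [Hik0 Hk0j Hmax]] := argmax_range (fun k => lvl p U (nth u P k)) Hij.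
have Hk0s : (k0 < size P)%N by apply: leq_ltn_trans Hjs.
set l := lvl p U (nth u P k0).
set z := nth u P k0; set x := nth u P i; set y := nth u P j.
have Hl1 : (1 <= l)%N by apply: lvl_ge1.
have Hlp : (l <= p)%N by apply: lvl_le.
exists l; first by rewrite Hl1 Hlp.
have Hsubw := walk_sub_idx HPw Hij Hjs.
have HsubG : forall w, w \in subpath P i j -> w \in Gset p U l.
  move=> w /(mem_sub_idx u Hjs)[k [H1 H2 ->]]; rewrite inE; exact: Hmax.
have HsubwG := walk_restrict Hsubw HsubG.
split => // Q HQ.
rewrite leNgt; apply/negP => HQlt.
have E2 := plen_sub wt Hij Hjs.
case: (boolP (has (fun w => w \in D) Q)) => [/hasP[f HfQ HfD] | Hno]; last first.
  have HQD : is_walk (~: D) e x y Q.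
    apply: walk_restrict HQ _ => w Hw; rewrite inE; apply/negP => HwD.
    by move/negP: Hno; apply; apply/hasP; exists w.
  have W1 := walk_take HPw His.
  have W3 := walk_drop HPw Hjs.
  have W23 := walk_glue HQD W3.
  have Wall := walk_glue W1 W23.
  have := HPmin _ Wall.
  rewrite (plen_glue_walk wt W1 W23) (plen_glue_walk wt HQD W3).
  rewrite (pre_suf wt Hjs).
  change (plen wt (take i.+1 P)) with (pre wt P i).
  change (plen wt (drop j P)) with (suf wt P j).
  by apply: arith1; rewrite -E2.
have Hkf : (index f Q < size Q)%N by rewrite index_mem.
have WQx := walk_take HQ Hkf; rewrite nth_index // in WQx.
have HQxle := plen_take_le (index f Q) hw HQ.
have Hxz := walk_sub_idx HPw Hik0 Hk0s.
have HxzG : is_walk (Gset p U l) e x z (subpath P i k0).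
  apply: walk_restrict Hxz _ => w /(mem_sub_idx u Hk0s)[k [H1 H2 ->]].
  rewrite inE; apply: Hmax => //; exact: leq_trans Hk0j.
have Wzx := walk_rev esym HxzG.
have Wzf := walk_glue Wzx WQx.
have Hplzf := plen_glue_walk wt Wzx WQx.
rewrite plen_rev // in Hplzf.
have Hsubk0 : plen wt (subpath P i k0) <= plen wt (subpath P i j).
  by rewrite E2 (plen_sub wt Hik0 Hk0s) lerD2r (pre_mono hw1 HPw Hk0j Hjs).
have GU : {subset Gset p U l <= ~: Unext p U l}.
  by move=> w Hw; rewrite inE; apply: Gset_Unext.
have WzfU := walk_sub GU Wzf.
have [Psh [Hsh Hshle]] := exists_shortest hw WzfU.
case: (Hcov (Unext p U l) (U l)) => _ H2 H3 _.
have HzG : z \in Gset p U l by rewrite inE.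
have HzS : z \in U l :\: Unext p U l.
  apply/setDP; split; [exact: lvl_in | exact: Gset_Unext Hlp HzG].
have HfG : f \in Gset p U l := walk_mem HQ HfQ.
have HfA : f \in ~: Unext p U l := GU _ HfG.
have [w Hw [Hzt Hft Hdep]] := H3 z f Psh HzS HfA Hsh.
have [Hwf Hroot] := H2 w Hw.
have HzD : z \notin D.
  have := walk_mem HPw (mem_nth u Hk0s); rewrite inE; exact.
have [nb [f' [HnbD Hf'D Hf'tv Hdist Hdisj]]] := tree_escape hw Hwf wsym esym Hzt Hft HzD HfD.
have Hnb : nb \in VHs.
  rewrite /VHs /VH; apply/setDP; split => //; apply/setUP; right.
  apply/bigcupP; exists f' => //.
  rewrite inE; apply/existsP; exists (Ordinal (Hlp : (l < p.+1)%N)); apply/existsP; exists w.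
  apply/and3P; split.
  - by rewrite /in_calT /= Hl1 Hlp /=.
  - exact: Hf'tv.
  case/orP: Hdisj => [->//|/and5P[Hnbt Hnbr Hpar Hanc1 Hanc2]].
  apply/orP; right; rewrite Hnbt Hnbr Hpar /=.
  have Hwt : w \in tv (cov (Unext p U l) (U l) w) by have := root_in Hwf; rewrite Hroot.
  have Hiw : forall k, iter k (tpar (cov (Unext p U l) (U l) w)) w = w.
    by move=> k'; have := iter_root Hwf k'; rewrite Hroot.
  rewrite Hroot in Hanc1.
  apply/existsP; exists z; rewrite HzS /=; apply/existsP; exists w; rewrite Hw Hzt Hwt /=.
  rewrite /onpath Hanc2 /=; apply/forallP => y0; apply/implyP => /andP[_ Hy].
  move: Hy; rewrite /anc => /andP[_ /existsP[k /eqP Hk]].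
  by rewrite -Hk Hiw.
apply: (Hfar k0 _ nb Hnb).
  by apply/andP; split; [exact: leq_trans Hi0 Hik0 | exact: leq_ltn_trans Hk0j Hj].
case: Hdist => Qd [HQd Hlen]; exists Qd; split => //; apply: le_trans Hlen _.
have Hsegb : plen wt (subpath P i j) <= eps4 * Num.min (pre wt P k0) (suf wt P k0).
  move: Hseg; rewrite /seg_rel => /orP[/and3P[S1 S2 /eqP S3]|/and3P[S1 S2 /eqP S3]].
    have hpi := pre_ge1 hw1 HPw Hi0 His.
    have hpj := pre_ge1 hw1 HPw (leq_trans Hi0 Hij) Hjs.
    have hb := flog_close eps4_pos (lt_le_trans ltr01 hpi) (lt_le_trans ltr01 hpj) S3.
    rewrite min_l; last exact: (arith_min1 (pre_suf wt Hk0s) (pre_mono hw1 HPw Hk0j Hjs) S2).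
    rewrite E2; exact: arith3 eps4_pos hb (pre_mono hw1 HPw Hik0 Hk0s).
  have hsi := suf_ge1 hw1 HPw (leq_ltn_trans Hij Hj).
  have hsj := suf_ge1 hw1 HPw Hj.
  have hb := flog_close eps4_pos (lt_le_trans ltr01 hsj) (lt_le_trans ltr01 hsi) (Logic.eq_sym S3).
  rewrite min_r; last exact: (arith_min2 (pre_suf wt Hk0s) (suf_anti hw1 HPw Hik0 Hk0s) S1).
  rewrite E2 (arith_sub2 (pre_suf wt His) (pre_suf wt Hjs)).
  exact: arith3 eps4_pos hb (suf_anti hw1 HPw Hk0j Hjs).
apply: le_trans Hdep _.
apply: (arith2 k2_ge0 Hshle Hplzf Hsubk0 HQxle HQlt Hsegb key).
Qed.
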